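(* Let $\mathcal{P}_1$ be the set of $s\in\mathcal{A}^*$ with $s_{|s|-1}<s_{|s|}=\mathsf{asc}(s)$. For every $n$ there is a bijection $\phi_1:\mathcal{A}_n\cap\mathcal{P}_1\to\mathcal{A}_{n-1}\cap\mathcal{A}^*$ such that for all $s$: $\mathsf{asc}(s)=\mathsf{asc}(\phi_1(s))+1$, $\mathsf{rmin}(s)=\mathsf{rmin}(\phi_1(s))+1$, and $\mathsf{rep},\mathsf{zero},\mathsf{max},\mathsf{ealm},\mathsf{rpos}$ take the same values on $s$ and $\phi_1(s)$.
   Context: For a sequence $s$, $\mathsf{asc}(s)=|\{i:s_i<s_{i+1}\}|$. An ascent sequence is a sequence $s=(s_1,\dots,s_n)$ of non-negative integers with $s_1=0$, $s_i\le\mathsf{asc}(s_1,\dots,s_{i-1})+1$ for $i\ge2$; $\mathcal{A}_n$ is the set of those of length $n$, $|s|$ the length; $\mathcal{A}^*$ is the set of all ascent sequences except those of the form $(0,1,\dots,|s|-1)$. $\mathsf{rep}(s)=|s|-|\{s_i\}|$; $\mathsf{zero}(s)=|\{i:s_i=0\}|$; $\mathsf{max}(s)=|\{i:s_i=i-1\}|$; $\mathsf{ealm}(s)=s_{\mathsf{max}(s)+1}$ if $\mathsf{max}(s)\ne|s|$, else $0$. A right-to-left minimum is an entry $s_i$ with $s_i<s_j$ for all $j>i$; $\mathsf{rmin}(s)$ is their number; they are indexed $0,\dots,\mathsf{rmin}(s)-1$ from left to right, with values $\mathrm{Rmin}(s)_m$ and positions $\mathrm{Prm}(s)_m$. $\mathsf{rpos}(s)$: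 $0$ if $\mathsf{rmin}(s)=|s|$; otherwise the maximal $m$ such that the value $\mathrm{Rmin}(s)_m$ occurs at least twice after position $\mathrm{Prm}(s)_{m-1}$ (for $m=0$: at least twice in $s$), and $0$ if none. *)

(* Defs.v *)
(* ascent sequences as seq nat, 0-indexed positions. *)
From mathcomp Require Import all_boot.
Set Implicit Arguments. Unset Strict Implicit. Unset Printing Implicit Defensive.

Definition asc (s : seq nat) : nat :=
  count (fun p : nat * nat => p.1 < p.2) (zip s (behead s)).

(* ascent sequence: s_1 = 0 and s_i <= asc(s_1..s_{i-1}) + 1 for i >= 2
   (0-indexed: s_0 = 0, s_i <= asc (take i s) + 1 for i >= 1). *)
Definition is_ascent (s : seq nat) : bool :=
  all (fun i => nth 0 s i <= (if i == 0 then 0 else (asc (take i s)).+1))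
      (iota 0 (size s)).

Definition A_n (n : nat) (s : seq nat) : bool := is_ascent s && (size s == n).

Definition A_star (s : seq nat) : bool := is_ascent s && (s != iota 0 (size s)).

Definition P1 (s : seq nat) : bool :=
  [&& A_star s, 2 <= size s,
      nth 0 s (size s).-2 < nth 0 s (size s).-1 &
      nth 0 s (size s).-1 == asc s].

Definition rep (s : seq nat) : nat := size s - size (undup s).
Definition zero (s : seq nat) : nat := count_mem 0 s.
(* max(s) = #{i (1-indexed) : s_i = i - 1} = #{i (0-indexed) : s_i = i} *)
Definition maxst (s : seq nat) : nat :=
  count (fun i => nth 0 s i == i) (iota 0 (size s)).
Definition ealm (s : seq nat) : nat :=
  if maxst s != size s then nth 0 s (maxst s) else 0.

(* Prm(s): positions (0-indexed, increasing) of right-to-left minima *)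
Definition Prm (s : seq nat) : seq nat :=
  [seq i <- iota 0 (size s) |
     all (fun j => nth 0 s i < nth 0 s j) (iota i.+1 (size s - i.+1))].
Definition Rmin (s : seq nat) : seq nat := [seq nth 0 s i | i <- Prm s].
Definition rmin (s : seq nat) : nat := size (Prm s).

Definition rpos_cond (s : seq nat) (m : nat) : bool :=
  2 <= count_mem (nth 0 (Rmin s) m)
         (if m == 0 then s else drop (nth 0 (Prm s) m.-1).+1 s).

Definition rpos (s : seq nat) : nat :=
  if rmin s == size s then 0
  else \max_(m < rmin s | rpos_cond s m) (m : nat).

(* Main.v *)
Require Import Defs.
From mathcomp Require Import all_boot zify.

Lemma iotaSr m n : iota m n.+1 = rcons (iota m n) (m + n).
Proof. by rewrite -addn1 iotaD cats1. Qed.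

Lemma asc_cons2 a b l : asc [:: a, b & l] = (a < b) + asc (b :: l).
Proof. by []. Qed.

Lemma asc_rcons t x :
  asc (rcons t x) = asc t + (if t is [::] then 0 else last 0 t < x).
Proof.
elim: t => [|a l IH] //=.
case: l IH => [|b l] IH /=; first by rewrite /asc /= addn0.
rewrite asc_cons2 IH asc_cons2 /=. lia.
Qed.

Lemma take_rcons_size (t : seq nat) x : take (size t) (rcons t x) = t.
Proof. by rewrite -cats1 take_size_cat. Qed.

Lemma is_ascent_rcons t x :
  is_ascent (rcons t x) =
  is_ascent t && (x <= if t == [::] then 0 else (asc t).+1).
Proof.
rewrite /is_ascent size_rcons iotaSr add0n all_rcons andbC.
congr andb; last first.
  rewrite nth_rcons ltnn eqxx take_rcons_size.
  by case: t.
apply: eq_in_all => i; rewrite mem_iota add0n => /andP[_ hi].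
rewrite nth_rcons hi -cats1 takel_cat //; exact: ltnW.
Qed.

Lemma asc_nil : asc [::] = 0. Proof. by []. Qed.
Lemma asc_one a : asc [:: a] = 0. Proof. by []. Qed.

Lemma asc_bound t : is_ascent t -> all (fun y => y <= asc t) t.
Proof.
elim/last_ind: t => [|t x IH] //.
rewrite is_ascent_rcons => /andP[At hx].
have IH' := IH At.
rewrite all_rcons asc_rcons.
case: t IH At hx IH' => [|a l] IH At hx IH' /=.
  by rewrite asc_nil; move: hx; rewrite /=; lia.
have hl : last a l <= asc (a :: l).
  by move/allP: IH'; apply; exact: mem_last.
apply/andP; split.
  move: hx => /= hx; case: (ltnP (last a l) x) => h; lia.
apply: sub_all IH' => y; lia.
Qed.

Lemma asc_le t : asc t <= (size t).-1.
Proof.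
elim/last_ind: t => [|t x IH] //.
rewrite asc_rcons size_rcons /=.
case: t IH => [|a l] //= IH. lia.
Qed.

Lemma iota_asc t : is_ascent t -> t != [::] -> (asc t).+1 = size t -> t = iota 0 (size t).
Proof.
elim/last_ind: t => [|t x IH] //.
rewrite is_ascent_rcons => /andP[At hx] _.
rewrite asc_rcons size_rcons iotaSr add0n.
case: t IH At hx => [|a l] IH At hx.
  by move: hx => /=; case: x.
rewrite -/(rcons _ _).
move=> E.
have := asc_le (a :: l) => /= hle.
have E2 : (asc (a :: l)).+1 = size (a :: l) /\ last a l < x.
  move: E; case: (ltnP (last a l) x) => /= h; lia.
case: E2 => E2 hlt.
have Ht := IH At isT E2.
move: hx => /= hx.
have hl : last a l = size l.
  have : last 0 (a :: l) = last 0 (iota 0 (size l).+1) by rewrite -Ht.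
  by rewrite iotaSr last_rcons.
have hxe : x = (size l).+1 by move: E2 => /= E2; lia.
rewrite hxe; move: Ht => /= [-> Hl]; by rewrite {1}Hl.
Qed.

Lemma asc_iota n : asc (iota 0 n) = n.-1.
Proof.
elim: n => [|n IH] //.
rewrite iotaSr asc_rcons IH add0n.
case: n IH => [|n] IH //.
have -> : (if iota 0 n.+1 is [::] then 0 else last 0 (iota 0 n.+1) < 0 + n.+1) = 1.
  by rewrite iotaSr last_rcons /= add0n ltnSn; case: (iota 0 n).
by rewrite addn1.
Qed.

Lemma last_lt t x : is_ascent t -> t != [::] -> x = (asc t).+1 -> last 0 t < x.
Proof.
move=> At tn ->.
have /allP := asc_bound _ At; apply.
by case: t At tn => // a l _ _; rewrite /= mem_last.
Qed.

Lemma all_lt t x y : is_ascent t -> x = (asc t).+1 -> y \in t -> y < x.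
Proof. by move=> At -> yt; have /allP := asc_bound _ At; apply. Qed.

Lemma P1_rcons t x : P1 (rcons t x) =
  [&& is_ascent t, t != [::], t != iota 0 (size t) & x == (asc t).+1].
Proof.
rewrite /P1 /A_star is_ascent_rcons size_rcons iotaSr add0n /= !nth_rcons ltnn eqxx.
case: t => [|a l] /=; first by rewrite !andbF.
rewrite leqnn -/(rcons (a :: l) x) asc_rcons /= (nth_last 0 (a :: l)) /=.
apply/idP/idP.
  case/and3P=> [/andP[/andP[At hx] hne] hlt /eqP hxe].
  rewrite hlt addn1 in hxe; rewrite At hxe eqxx andbT /=.
  apply/eqP => E; move: hne.
  have ha : asc (a :: l) = size l by rewrite E (asc_iota (size l).+1).
  rewrite hxe ha; case: E => -> El; rewrite {1}El.
  by rewrite eqxx.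
case/and3P => At hne /eqP hxe.
have hlt := last_lt (a :: l) x At isT hxe; rewrite /= in hlt.
rewrite At hlt hxe addn1 eqxx leqnn /= andbT.
apply/eqP => E.
have [E1 E2] : a = 0 /\ rcons l (asc (a :: l)).+1 = rcons (iota 1 (size l)) (size l).+1.
  by case: E.
move: hne; rewrite E1.
have := rcons_inj E2; case=> -> _.
by rewrite size_iota eqxx.
Qed.

Section S.
Variables (t : seq nat) (x : nat).
Hypothesis Hlt : forall y, y \in t -> y < x.

Lemma nth_rc i : i < size t -> nth 0 (rcons t x) i = nth 0 t i.
Proof. by move=> hi; rewrite nth_rcons hi. Qed.

Lemma Prm_rcons : Prm (rcons t x) = rcons (Prm t) (size t).
Proof.
rewrite /Prm size_rcons iotaSr filter_rcons subnn /= add0n.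
congr rcons.
apply: eq_in_filter => i; rewrite mem_iota add0n => /andP[_ hi].
rewrite subSn // iotaSr subnKC // all_rcons nth_rc // nth_rcons ltnn eqxx.
rewrite Hlt ?mem_nth //=.
apply: eq_in_all => j; rewrite mem_iota subnKC // => /andP[_ hj].
by rewrite !nth_rc.
Qed.

Lemma Prm_lt i : i \in Prm t -> i < size t.
Proof. by rewrite /Prm mem_filter mem_iota add0n => /andP[_ /andP[]]. Qed.

Lemma Rmin_rcons : Rmin (rcons t x) = rcons (Rmin t) x.
Proof.
rewrite /Rmin Prm_rcons map_rcons nth_rcons ltnn eqxx; congr rcons.
by apply/eq_in_map => i /Prm_lt hi; rewrite nth_rc.
Qed.

Lemma xnotin : x \notin t.
Proof. by apply/negP => /Hlt; rewrite ltnn. Qed.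

Lemma rep_rcons : rep (rcons t x) = rep t.
Proof.
rewrite /rep undup_rcons size_rcons !size_rcons.
have -> : [seq y <- undup t | y != x] = undup t.
  apply/all_filterP/allP => y; rewrite mem_undup => /Hlt.
  by rewrite neq_ltn => ->.
by rewrite subSS.
Qed.

Lemma zero_rcons : x != 0 -> zero (rcons t x) = zero t.
Proof. move=> hx; rewrite /zero -cats1 count_cat /=. by case: x Hlt hx => [|x0] _ //= _; rewrite !addn0. Qed.

Lemma maxst_rcons : x != size t -> maxst (rcons t x) = maxst t.
Proof.
move=> hx; rewrite /maxst size_rcons iotaSr -[rcons (iota _ _) _]cats1 count_cat /= add0n.
rewrite nth_rcons ltnn eqxx (negbTE hx) addn0.
rewrite addn0; apply: eq_in_count => i; rewrite mem_iota add0n => /andP[_ hi].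
by rewrite nth_rc.
Qed.

End S.

Lemma maxst_le t : maxst t <= size t.
Proof. by rewrite /maxst -{2}(size_iota 0 (size t)) count_size. Qed.

Lemma maxst_neq t : t != iota 0 (size t) -> maxst t != size t.
Proof.
move=> hne; apply/negP => /eqP E; move: hne.
have : all (fun i => nth 0 t i == i) (iota 0 (size t)).
  by rewrite all_count size_iota; apply/eqP.
move/allP => H.
apply/negP; rewrite negbK; apply/eqP.
apply: (@eq_from_nth _ 0); first by rewrite size_iota.
move=> i hi; rewrite nth_iota // add0n; apply/eqP; apply: H.
by rewrite mem_iota.
Qed.

Lemma count_rcons_neq (s : seq nat) v x : x != v -> count_mem v (rcons s x) = count_mem v s.
Proof.
move=> h; rewrite -cats1 count_cat.
have /count_memPn -> : v \notin [:: x] by rewrite inE eq_sym.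
by rewrite addn0.
Qed.

Lemma count_drop_le (s : seq nat) v k : count_mem v (drop k s) <= count_mem v s.
Proof. by rewrite -{2}(cat_take_drop k s) count_cat leq_addl. Qed.

Section S.
Variables (t : seq nat) (x : nat).
Hypothesis Hlt : forall y, y \in t -> y < x.

Lemma ealm_rcons : x != size t -> t != iota 0 (size t) -> ealm (rcons t x) = ealm t.
Proof.
move=> hx hne; rewrite /ealm maxst_rcons // size_rcons.
have hk : maxst t < size t.
  by rewrite ltn_neqAle maxst_neq // maxst_le.
rewrite ifT; last by apply/eqP => E; move: hk; rewrite E ltnNge leqnSn.
by rewrite ifT ?nth_rc // neq_ltn hk.
Qed.

Lemma size_Rmin s : size (Rmin s) = rmin s.
Proof. by rewrite /Rmin size_map. Qed.

Lemma rmin_rcons : rmin (rcons t x) = (rmin t).+1.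
Proof. by rewrite /rmin Prm_rcons // size_rcons. Qed.

Lemma Rmin_in m : m < rmin t -> nth 0 (Rmin t) m \in t.
Proof.
move=> hm; rewrite /Rmin (nth_map 0) //.
apply: mem_nth; apply: Prm_lt; exact: mem_nth.
Qed.

Lemma count_x : count_mem x (rcons t x) = 1.
Proof.
rewrite -cats1 count_cat /= eqxx.
by have /count_memPn -> := xnotin t x Hlt.
Qed.

Lemma rpos_cond_rcons m : m < rmin t -> rpos_cond (rcons t x) m = rpos_cond t m.
Proof.
move=> hm; rewrite /rpos_cond Rmin_rcons // nth_rcons size_Rmin hm.
have hv := Rmin_in m hm.
have hvx : (x == nth 0 (Rmin t) m) = false.
  by apply/negbTE; rewrite eq_sym neq_ltn Hlt.
case: eqP => _.
  by rewrite count_rcons_neq ?hvx.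
rewrite Prm_rcons // nth_rcons.
have hm1 : m.-1 < size (Prm t) by rewrite -/(rmin t); lia.
rewrite hm1.
have hk : (nth 0 (Prm t) m.-1) < size t by apply: Prm_lt; exact: mem_nth.
by rewrite drop_rcons // count_rcons_neq ?hvx.
Qed.

Lemma rpos_cond_last : rpos_cond (rcons t x) (rmin t) = false.
Proof.
rewrite /rpos_cond Rmin_rcons // nth_rcons size_Rmin ltnn eqxx.
apply/negbTE; rewrite -ltnNge ltnS.
case: eqP => _; first by rewrite count_x.
rewrite -count_x; exact: count_drop_le.
Qed.

Lemma rpos_rcons : rpos (rcons t x) = rpos t.
Proof.
rewrite /rpos rmin_rcons size_rcons eqSS.
case: eqP => // _.
rewrite big_mkcond big_ord_recr /= rpos_cond_last maxn0 [RHS]big_mkcond.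
apply: eq_bigr => i _; by rewrite rpos_cond_rcons.
Qed.

End S.

Lemma P1_inv n s : A_n n s && P1 s ->
  exists t, [/\ s = rcons t (asc t).+1, is_ascent t, t != [::],
               t != iota 0 (size t) & n = (size t).+1].
Proof.
case/lastP: s => [|t x]; first by rewrite /P1 andbF.
case/andP => /andP[_ /eqP hn]; rewrite P1_rcons => /and4P[At tn tne /eqP hx].
by exists t; rewrite -hn size_rcons hx.
Qed.

Theorem mainTheorem10 (n : nat) :
  exists phi : seq nat -> seq nat,
    [/\ (forall s, A_n n s && P1 s -> A_n n.-1 (phi s) && A_star (phi s)),
        {in [pred s | A_n n s && P1 s] &, injective phi},
        (forall t, A_n n.-1 t && A_star t ->
           exists2 s, A_n n s && P1 s & phi s = t) &
        (forall s, A_n n s && P1 s ->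
           asc s = (asc (phi s)).+1 /\
           rmin s = (rmin (phi s)).+1 /\
           rep s = rep (phi s) /\
           zero s = zero (phi s) /\
           maxst s = maxst (phi s) /\
           ealm s = ealm (phi s) /\
           rpos s = rpos (phi s))].
Proof.
have phiE : forall (t : seq nat) (x : nat), take (size (rcons t x)).-1 (rcons t x) = t.
  by move=> t x; rewrite size_rcons take_rcons_size.
exists (fun s => take (size s).-1 s); split.
- move=> s /P1_inv [t [-> At tn tne ->]].
  by rewrite phiE /A_n /A_star At eqxx tne.
- move=> s1 s2; rewrite !inE => /P1_inv [t1 [-> _ _ _ _]] /P1_inv [t2 [-> _ _ _ _]].
  by rewrite !phiE => ->.
- move=> t /andP[/andP[At /eqP hn] /andP[_ tne]].
  have tn : t != [::] by case: t tne {At hn}.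
  have hn' : n = (size t).+1.
    by case: t tn hn {At tne} => //= a l _; lia.
  exists (rcons t (asc t).+1); last by rewrite phiE.
  rewrite /A_n size_rcons hn' eqxx andbT P1_rcons At tn tne eqxx /=.
  by rewrite andbT is_ascent_rcons At (negbTE tn) /= ltnSn.
- move=> s /P1_inv [t [-> At tn tne _]]; rewrite phiE.
  have Hlt : forall y, y \in t -> y < (asc t).+1 by move=> y; exact: all_lt.
  have hxs : (asc t).+1 != size t.
    apply/eqP => E; move: tne; rewrite (iota_asc t At tn E) size_iota eqxx //.
  split.
    rewrite asc_rcons; case: t At tn tne Hlt hxs => // a l At _ _ _ _.
    by rewrite (last_lt (a :: l) _ At isT erefl) addn1.
  split; first exact: rmin_rcons.
  split; first exact: rep_rcons.
  split; first exact: zero_rcons.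
  split; first exact: maxst_rcons.
  split; first exact: ealm_rcons.
  exact: rpos_rcons.
Qed.
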